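(* For every positive integer $n$, $N'(n,n-1,0)=\frac{n(n+1)}{2}-1$.
   Context: $\mathbb{Z}_4$ is the ring of integers modulo $4$; a $\mathbb{Z}_4$-code of length $n$ is a $\mathbb{Z}_4$-submodule of $\mathbb{Z}_4^n$. Two codes are equivalent if one is obtained from the other by permuting coordinates and changing the signs of some coordinates. Every $\mathbb{Z}_4$-code is permutation-equivalent to one with generator matrix $\begin{pmatrix} I_{k_1} & A & B \\ O & 2I_{k_2} & 2D\end{pmatrix}$ with $A,D$ $(0,1)$-matrices and $B$ a $\mathbb{Z}_4$-matrix; the code then has type $4^{k_1}2^{k_2}$. The trivial extension of a code $C$ of length $n-1$ is $\{(c,0)\mid c\in C\}$ (the only code of length $0$ is the zero code). $N'(n,k_1,k_2)$ denotes the number of equivalence classes of $\mathbb{Z}_4$-codes of length $n$ and type $4^{k_1}2^{k_2}$ that are not equivalent to the trivial extension of any $\mathbb{Z}_4$-code of length $n-1$. *)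

(* Defs.v *)
From HB Require Import structures.
From mathcomp Require Import all_boot all_order all_algebra all_fingroup.
Set Implicit Arguments. Unset Strict Implicit. Unset Printing Implicit Defensive.
Import GRing.Theory.
Local Open Scope ring_scope.

(* Z_4 : 'Z_4 (4 >= 2, so this is genuinely Z/4Z). *)
Notation Z4 := 'Z_4.
Notation word n := 'rV[Z4]_n.

Definition is_code n (C : {set word n}) : bool :=
  [&& (0 : word n) \in C,
      [forall x in C, forall y in C, x + y \in C] &
      [forall a : Z4, forall x in C, a *: x \in C]].

(* C has type 4^k1 2^k2: C is isomorphic (as a Z4-module) to
   Z4^k1 x Z2^k2, witnessed by elements u_i and v_j with 2 v_j = 0 such that
   (a,b) |-> sum_i a_i u_i + sum_j b_j v_j is a bijection from
   Z4^k1 x {0,1}^k2 onto C. *)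
Definition type_map n k1 k2 (u : {ffun 'I_k1 -> word n})
    (v : {ffun 'I_k2 -> word n})
    (ab : {ffun 'I_k1 -> Z4} * {ffun 'I_k2 -> bool}) : word n :=
  \sum_i (ab.1 i) *: u i + \sum_j (ab.2 j)%:R *: v j.

Definition has_type n (C : {set word n}) (k1 k2 : nat) : bool :=
  [exists u : {ffun 'I_k1 -> word n}, exists v : {ffun 'I_k2 -> word n},
    [&& [forall j, v j *+ 2 == 0],
        injectiveb (type_map u v) &
        [set type_map u v ab | ab in predT] == C]].

Definition equiv_codes n (C D : {set word n}) : bool :=
  [exists s : 'S_n, exists e : {ffun 'I_n -> bool},
    D == [set (\row_i ((-1) ^+ e i * c 0 (s i))) | c : word n in C]].

(* Trivial extension of a code of length n.-1 to length n: c |-> (c, 0),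
   the new coordinate being the last one. *)
Definition triv_ext n (D : {set word n.-1}) : {set word n} :=
  [set (\row_(i < n) match (insub (nat_of_ord i) : option 'I_(n.-1)) with
                     | Some j => c 0 j
                     | None => 0
                     end) | c : word n.-1 in D].

Definition good_codes n (k1 k2 : nat) : {set {set word n}} :=
  [set C : {set word n} |
     [&& is_code C, has_type C k1 k2 &
         ~~ [exists D : {set word n.-1}, is_code D && equiv_codes C (triv_ext D)]]].

Definition Nprime n (k1 k2 : nat) : nat :=
  #|[set [set D in good_codes n k1 k2 | equiv_codes C D]
       | C in good_codes n k1 k2]|.

(* Main.v *)
From HB Require Import structures.
Require Import Defs.
From mathcomp Require Import all_boot all_order all_algebra all_fingroup zify.
Set Implicit Arguments. Unset Strict Implicit. Unset Printing Implicit Defensive.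
Import GRing.Theory.
Local Open Scope ring_scope.

Ltac z4c x := case: x => [[|[|[|[|?]]]] ?] //.

Definition dotw n (c w : word n) : Z4 := \sum_i c 0 i * w 0 i.
Definition Kset n (w : word n) : {set word n} := [set c | dotw c w == 0].
Definition ev n (k : 'I_n) : word n := \row_l ((l == k)%:R).
Definition mono n (s : 'S_n) (e : {ffun 'I_n -> bool}) (c : word n) : word n :=
  \row_i ((-1) ^+ e i * c 0 (s i)).
Definition phi n (C : {set word n}) : nat * nat :=
  (#|[set i | 2 *: ev i \notin C]|, #|[set i | (2 *: ev i \in C) && (ev i \notin C)]|).

Lemma dotwD n (c d w : word n) : dotw (c + d) w = dotw c w + dotw d w.
Proof. by rewrite /dotw -big_split; apply: eq_bigr => i _; rewrite mxE mulrDl. Qed.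
Lemma dotwZ n a (c w : word n) : dotw (a *: c) w = a * dotw c w.
Proof. by rewrite /dotw mulr_sumr; apply: eq_bigr => i _; rewrite mxE mulrA. Qed.
Lemma dotw0 n (w : word n) : dotw 0 w = 0.
Proof. by rewrite /dotw big1 // => i _; rewrite mxE mul0r. Qed.
Lemma dotw_ev n (k : 'I_n) a (w : word n) : dotw (a *: ev k) w = a * w 0 k.
Proof.
rewrite dotwZ /dotw (bigD1 k) //= big1 ?addr0; first by rewrite mxE eqxx mul1r.
by move=> i /negPf ik; rewrite mxE ik mul0r.
Qed.

Lemma Kset_code n (w : word n) : is_code (Kset w).
Proof.
apply/and3P; split; first by rewrite inE dotw0.
  apply/forallP => x; apply/implyP; rewrite inE => /eqP hx.
  apply/forallP => y; apply/implyP; rewrite inE => /eqP hy.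
  by rewrite inE dotwD hx hy addr0.
apply/forallP => a; apply/forallP => x; apply/implyP; rewrite inE => /eqP hx.
by rewrite inE dotwZ hx mulr0.
Qed.

Lemma code_scale n (C : {set word n}) a x : is_code C -> x \in C -> a *: x \in C.
Proof. by case/and3P => _ _ /forallP /(_ a) /forallP /(_ x) /implyP. Qed.

Lemma sign2 (b : bool) : (-1) ^+ b * (-1) ^+ b = 1 :> Z4.
Proof. by case: b; rewrite ?mulr1 ?mulrNN ?mulr1. Qed.

Lemma mono_ev n (s : 'S_n) e a i :
  mono s e (a *: ev (s i)) = ((-1) ^+ e i * a) *: ev i.
Proof.
apply/rowP => l; rewrite !mxE (inj_eq perm_inj).
by case: eqP => [->|_]; rewrite ?mulr1 ?mulr0.
Qed.

Lemma equiv_ev n (C D : {set word n}) s e a i :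
  is_code C -> is_code D -> D = [set mono s e c | c in C] ->
  (a *: ev i \in D) = (a *: ev (s i) \in C).
Proof.
move=> cC cD hD; rewrite hD; apply/idP/idP.
  case/imsetP => c cC' eq.
  suff -> : a *: ev (s i) = (-1) ^+ e i *: c by apply: code_scale.
  apply/rowP => k; rewrite !mxE.
  have [l ->] : exists l, k = s l by exists (s^-1 k)%g; rewrite permKV.
  have := congr1 (fun r : word n => (-1) ^+ e l * r 0 l) eq.
  rewrite !mxE mulrA sign2 mul1r => <-.
  rewrite (inj_eq perm_inj); case: eqP => [->|_]; last by rewrite !mulr0.
  by rewrite !mulr1 mulrA sign2 mul1r.
move=> H; have := imset_f (mono s e) H; rewrite mono_ev -hD => H2.
have := code_scale ((-1) ^+ e i) cD H2.
by rewrite scalerA mulrA sign2 mul1r.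
Qed.

Lemma phi_equiv n (C D : {set word n}) :
  is_code C -> is_code D -> equiv_codes C D -> phi C = phi D.
Proof.
move=> cC cD /existsP [s /existsP [e /eqP hD]].
have hD' : D = [set mono s e c | c in C] by [].
rewrite /phi.
have -> : [set i | 2 *: ev i \notin D] = s @^-1: [set i | 2 *: ev i \notin C].
  by apply/setP => i; rewrite !inE (equiv_ev _ _ cC cD hD').
have -> : [set i | (2 *: ev i \in D) && (ev i \notin D)] =
   s @^-1: [set i | (2 *: ev i \in C) && (ev i \notin C)].
  apply/setP => i; rewrite !inE (equiv_ev _ _ cC cD hD').
  by rewrite -{1}(scale1r (ev i)) (equiv_ev _ _ cC cD hD') scale1r.
by rewrite !card_preimset //; apply: perm_inj.
Qed.
Lemma Kset_mono n (w w' : word n) (s : 'S_n) (e : {ffun 'I_n -> bool}) :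
  (forall i, (-1) ^+ e i * w 0 (s i) = w' 0 i) ->
  Kset w' = [set mono s e c | c in Kset w].
Proof.
move=> hw; apply/setP => d; apply/idP/idP; last first.
  case/imsetP => c; rewrite !inE => /eqP hc ->; apply/eqP.
  rewrite -[RHS]hc /dotw [RHS](reindex_inj (@perm_inj _ s)) /=.
  apply: eq_bigr => i _; rewrite -hw !mxE.
  by rewrite -mulrA [c 0 _ * _]mulrCA !mulrA sign2 mul1r.
rewrite inE => /eqP hd.
pose c : word n := \row_k ((-1) ^+ e (s^-1 k)%g * d 0 (s^-1 k)%g).
apply/imsetP; exists c.
  rewrite inE; apply/eqP; rewrite -[RHS]hd /dotw [LHS](reindex_inj (@perm_inj _ s)) /=.
  apply: eq_bigr => i _; rewrite !mxE permK -hw.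
  by rewrite -mulrA [d 0 _ * _]mulrC mulrA mulrC.
apply/rowP => i; rewrite !mxE permK.
by rewrite mulrA sign2 mul1r.
Qed.

Lemma in_Kset n (w : word n) c : (c \in Kset w) = (dotw c w == 0).
Proof. by rewrite inE. Qed.

Lemma phi_Kset n (w : word n) :
  phi (Kset w) = (#|[set i | 2 * w 0 i != 0]|, #|[set i | (2 * w 0 i == 0) && (w 0 i != 0)]|).
Proof.
rewrite /phi; congr (_, _); apply: eq_card => i; rewrite !inE !dotw_ev //.
by rewrite -(scale1r (ev i)) dotw_ev mul1r.
Qed.

Definition typ (x : Z4) : Z4 := if 2 * x != 0 then 1 else x.

Lemma count_typ n (w : word n) y :
  count_mem y [tuple typ (w 0 i) | i < n] = #|[set i | typ (w 0 i) == y]|.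
Proof.
rewrite /= count_map cardE /enum_mem size_filter /= count_filter.
by apply: eq_count => i; rewrite !inE andbT.
Qed.
Lemma typ_sign (x y : Z4) : typ x = typ y -> (-1) ^+ (y != x) * y = x.
Proof. move/eqP; z4c x; z4c y; move=> _; apply/eqP; exact: erefl. Qed.

Lemma card_typ n (v : word n) (y : Z4) :
  #|[set i | typ (v 0 i) == y]| =
  if y == 0 then #|[set i | v 0 i == 0]| else if y == 1 then #|[set i | 2 * v 0 i != 0]|
  else if y == 2 then #|[set i | (2 * v 0 i == 0) && (v 0 i != 0)]| else #|[set i : 'I_n | false]|.
Proof. z4c y; apply: eq_card => i; rewrite !inE; z4c (v 0 i). Qed.

Lemma card_parts n (v : word n) :
  addn (addn #|[set i | v 0 i == 0]| #|[set i | 2 * v 0 i != 0]|) #|[set i | (2 * v 0 i == 0) && (v 0 i != 0)]| = n.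
Proof.
rewrite -[RHS](card_ord n) -(cardsC [set i | v 0 i == 0]) -addnA; congr (_ + _)%N.
rewrite -(cardsID [set i | 2 * v 0 i != 0] (~: [set i | v 0 i == 0])); congr (_ + _)%N; apply: eq_card => i;
 rewrite !inE; z4c (v 0 i).
Qed.

Lemma classify n (w w' : word n) : phi (Kset w) = phi (Kset w') ->
  exists s : 'S_n, exists e : {ffun 'I_n -> bool},
    forall i, (-1) ^+ e i * w 0 (s i) = w' 0 i.
Proof.
rewrite !phi_Kset => -[h1 h2].
have h0 : #|[set i | w 0 i == 0]| = #|[set i | w' 0 i == 0]|.
  have := card_parts w; have := card_parts w'; rewrite h1 h2 => A B.
  move: (etrans B (esym A)).
  by move/eqP; rewrite !eqn_add2r => /eqP.
have hp : perm_eq [tuple typ (w' 0 i) | i < n] [tuple typ (w 0 i) | i < n].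
  apply/allP => y _ /=; rewrite !count_typ !card_typ h0 h1 h2 //.
case/tuple_permP: hp => p hp.
exists p, [ffun i => w 0 (p i) != w' 0 i] => i; rewrite ffunE.
apply: typ_sign.
have /val_inj/(congr1 (fun t => tnth t i)) := hp.
by rewrite !tnth_mktuple.
Qed.
Definition red (x : Z4) : 'F_2 := (nat_of_ord x)%:R.
Lemma red_zmod : zmod_morphism red.
Proof. by move=> x y; apply/eqP; z4c x; z4c y. Qed.
Lemma red_mon : monoid_morphism red.
Proof. split; first by [].
by move=> x y; apply/eqP; z4c x; z4c y. Qed.
HB.instance Definition _ := GRing.isZmodMorphism.Build _ _ red red_zmod.
HB.instance Definition _ := GRing.isMonoidMorphism.Build _ _ red red_mon.
Lemma Z4_unit_red (x : Z4) : red x != 0 -> x \is a GRing.unit.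
Proof. by z4c x. Qed.
Lemma red0_2 (x : Z4) : red x = 0 -> 2 * x = 0.
Proof. by move/eqP; z4c x; move=> _; apply/eqP. Qed.
Definition lft (x : 'F_2) : Z4 := (nat_of_ord x)%:R.
Lemma red_lft x : red (lft x) = x.
Proof. by apply/eqP; case: x => [[|[|?]] ?]. Qed.
Lemma lft2 x : 2 * lft x = 0 -> x = 0.
Proof. by move/eqP; apply: contraTeq; case: x => [[|[|?]] ?]. Qed.

Lemma dotw_mx n (c w : word n) : dotw c w = (c *m w^T) 0 0.
Proof. by rewrite mxE; apply: eq_bigr => i _; rewrite mxE. Qed.

Lemma hasK m (C : {set word m.+1}) : has_type C m 0 ->
  exists w : word m.+1, (exists j, w 0 j = 1) /\ C = Kset w.
Proof.
case/existsP => u /existsP [v /and3P [_ /injectiveP inj /eqP hC]].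
pose U : 'M[Z4]_(m, m.+1) := \matrix_(i, k) u i 0 k.
have tmE : forall ab, type_map u v ab = (\row_i ab.1 i) *m U.
  move=> [a b]; rewrite /type_map big_ord0 addr0 mulmx_sum_row /=.
  apply: eq_bigr => i _; rewrite mxE; congr (_ *: _); apply/rowP => k; rewrite !mxE.
  done.
have rE : forall a : 'rV_m, \row_i ([ffun i => a 0 i] : {ffun 'I_m -> Z4}) i = a.
  by move=> a; apply/rowP => i; rewrite !mxE ffunE.
pose ab (a : 'rV_m) := ([ffun i => a 0 i] : {ffun 'I_m -> Z4}, [ffun j : 'I_0 => false]).
have injU : forall a b : 'rV_m, a *m U = b *m U -> a = b.
  move=> a b h; have := inj (ab a) (ab b); rewrite !tmE /= !rE => /(_ h) E.
  by have := congr1 (fun p : {ffun 'I_m -> Z4} * {ffun 'I_0 -> bool} => \row_i p.1 i) E; rewrite /= !rE.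
have inC : forall c, (c \in C) = [exists a : 'rV_m, c == a *m U].
  move=> c; rewrite -hC; apply/imsetP/existsP => [[p _ ->]|[a /eqP ->]].
    by exists (\row_i p.1 i); rewrite tmE.
  by exists (ab a) => //; rewrite tmE /= rE.
pose Ub := map_mx red U.
have freeU : row_free Ub.
  apply: inj_row_free => vb hv.
  pose lb : 'rV_m := \row_i lft (vb 0 i).
  have h2 : (2 *: lb) *m U = 0 *m U.
    rewrite -scalemxAl mul0mx; apply/rowP => k; rewrite !mxE; apply: red0_2.
    have : map_mx red (lb *m U) = 0.
      rewrite map_mxM -hv; congr (_ *m _); apply/rowP => i; rewrite !mxE; exact: red_lft.
    by move=> E; have := congr1 (fun M : 'M['F_2]_(1, m.+1) => M 0 k) E; rewrite !mxE.
  have := injU _ _ h2 => /rowP h3; apply/rowP => i.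
  by have := h3 i; rewrite !mxE; apply: lft2.
have fullT : row_full Ub^T by rewrite /row_full mxrank_tr.
pose f := fullrankfun fullT.
have finj : injective f := @fullrankfun_inj _ _ _ _ fullT.
pose P : 'M[Z4]_m := colsub f U.
have Punit : P \in unitmx.
  rewrite unitmxE; apply: Z4_unit_red.
  have -> : red (\det P) = \det (map_mx red P) by rewrite det_map_mx.
  have -> : map_mx red P = (rowsub f Ub^T)^T by apply/matrixP => i k; rewrite !mxE.
  rewrite det_tr -unitfE -unitmxE; exact: fullrowsub_unit.
have [j hj] : exists j, forall k, (k \notin codom f) = (k == j).
  have : #|[pred k | k \notin codom f]| == 1%N.
    have E1 := cardC [pred k | k \in codom f].
    have E2 : #|[pred k | k \in codom f]| = m.
      by rewrite -[RHS](card_ord m) -(card_codom finj); apply: eq_card.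
    have E3 : #|[predC [pred k | k \in codom f]]| = #|[pred k | k \notin codom f]|.
      by apply: eq_card.
    rewrite card_ord E2 E3 in E1; apply/eqP; lia.
  by case/card1P => j hj; exists j => k; have := hj k; rewrite !inE.
pose y := col j U.
pose x := - (invmx P *m y).
pose w : word m.+1 := \row_k ((k == j)%:R + \sum_i (f i == k)%:R * x i 0).
have fnj : forall i, (f i == j) = false.
  by move=> i; apply/negbTE; rewrite -hj negbK codom_f.
have wj : w 0 j = 1.
  by rewrite mxE eqxx big1 ?addr0 // => i _; rewrite fnj mul0r.
have Uw : U *m w^T = 0.
  have -> : U *m w^T = y + P *m x.
    apply/matrixP => r s; rewrite !mxE (ord1 s).
    under eq_bigr => k _ do rewrite !mxE mulrDr mulr_sumr.
    rewrite big_split /=; congr (_ + _).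
      rewrite (bigD1 j) //= eqxx mulr1 big1 ?addr0 // => k /negPf ->.
      by rewrite mulr0.
    rewrite exchange_big /=; apply: eq_bigr => i _.
    rewrite (bigD1 (f i)) //= eqxx mul1r big1 ?addr0; first by congr (_ * _); rewrite !mxE.
    by move=> k /negPf; rewrite eq_sym => ->; rewrite mul0r mulr0.
  by rewrite /x mulmxN mulmxA mulmxV // mul1mx subrr.
have dotU : forall a : 'rV_m, dotw (a *m U) w = 0.
  by move=> a; rewrite dotw_mx -mulmxA Uw mulmx0 mxE.
exists w; split; first by exists j.
apply/setP => c; rewrite in_Kset inC; apply/existsP/idP => [[a /eqP ->]|].
  by rewrite dotU.
move=> /eqP hc.
pose a := (\row_i c 0 (f i)) *m invmx P.
exists a; apply/eqP.
have hf : forall i, (a *m U) 0 (f i) = c 0 (f i).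
  move=> i; have : (a *m P) 0 i = c 0 (f i) by rewrite mulmxKV // mxE.
  by rewrite !mxE => <-; apply: eq_bigr => r _; rewrite !mxE.
pose d := a *m U + (-1) *: c.
have dk : forall k, k != j -> d 0 k = 0.
  move=> k kj; have : k \in codom f by rewrite -[_ \in _]negbK hj (negbTE kj).
  case/codomP => i ->; rewrite !mxE.
  have hf' : \sum_j0 a 0 j0 * U j0 (f i) = c 0 (f i) by rewrite -hf mxE.
  rewrite hf'.
  by rewrite mulN1r subrr.
have dj : d 0 j = 0.
  have : dotw d w = 0 by rewrite dotwD dotwZ hc dotU mulr0 addr0.
  rewrite /dotw (bigD1 j) //= big1 ?addr0 ?wj ?mulr1 // => k kj.
  by rewrite dk // mul0r.
have d0 : d = 0.
  apply/rowP => k; rewrite [RHS]mxE.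
  by have [->|kj] := eqVneq k j; [rewrite dj | rewrite dk].
apply/eqP; rewrite eq_sym -subr_eq0; apply/eqP.
by rewrite -d0 /d scaleN1r.
Qed.
Lemma key m (C D : {set word m.+1}) :
  C \in good_codes m.+1 m 0 -> D \in good_codes m.+1 m 0 ->
  equiv_codes C D = (phi C == phi D).
Proof.
rewrite !inE => /and3P [cC tC _] /and3P [cD tD _].
apply/idP/eqP => [|h]; first exact: phi_equiv.
case: (hasK tC) => w [_ eC]; case: (hasK tD) => w' [_ eD].
rewrite eC eD in h *.
case: (classify h) => s [e hse].
apply/existsP; exists s; apply/existsP; exists e; apply/eqP.
exact: (Kset_mono hse).
Qed.

Lemma triv_zero m (C : {set word m.+1}) D :
  equiv_codes C (triv_ext D) -> exists i, forall c, c \in C -> c 0 i = 0.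
Proof.
case/existsP => s /existsP [e /eqP h]; exists (s ord_max) => c cC.
have : mono s e c \in triv_ext D by rewrite h; apply/imsetP; exists c.
case/imsetP => d _ E; have := congr1 (fun r : word m.+1 => r 0 ord_max) E.
rewrite !mxE insubN ?ltnn // => E2.
have := congr1 (fun x => (-1) ^+ e ord_max * x) E2.
by rewrite mulrA sign2 mul1r mulr0.
Qed.

Lemma dotw_single n (w c : word n) j : w 0 j = 1 -> (forall k, k != j -> w 0 k = 0) ->
  dotw c w = c 0 j.
Proof.
move=> wj wk; rewrite /dotw (bigD1 j) //= wj mulr1 big1 ?addr0 // => k /wk ->.
by rewrite mulr0.
Qed.

Lemma setT_code n : is_code [set: word n].
Proof.
apply/and3P; split; rewrite ?inE //.
  by apply/forallP => x; apply/implyP => _; apply/forallP => y; apply/implyP => _; rewrite inE.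
by apply/forallP => a; apply/forallP => x; apply/implyP => _; rewrite inE.
Qed.

Lemma Kset_triv m (w : word m.+1) j : w 0 j = 1 -> (forall k, k != j -> w 0 k = 0) ->
  equiv_codes (Kset w) (@triv_ext m.+1 [set: word m]).
Proof.
move=> wj wk; pose s := tperm ord_max j.
apply/existsP; exists s; apply/existsP; exists [ffun => false]; apply/eqP.
apply/setP => d; apply/idP/idP.
  case/imsetP => c0 _ ->.
  apply/imsetP; exists (\row_k (\row_(i < m.+1) match (insub (nat_of_ord i) : option 'I_m) with
                     | Some j => c0 0 j | None => 0 end) 0 (s k)).
    rewrite inE (dotw_single _ wj wk) !mxE /s tpermR insubN ?ltnn //.
  apply/rowP => i; rewrite !mxE ffunE /= mul1r tpermK. reflexivity.
case/imsetP => c; rewrite in_Kset (dotw_single _ wj wk) => /eqP c0 ->.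
apply/imsetP; exists (\row_(k < m) ((\row_i ((-1) ^+ [ffun=> false] i * c 0 (s i))) : word m.+1) 0 (widen_ord (leqnSn m) k)).
  by rewrite inE.
apply/rowP => i; rewrite !mxE; case: insubP => [k _ vk|].
  by rewrite !mxE; have -> : widen_ord (leqnSn m) k = i by apply: val_inj.
rewrite /= -leqNgt => hi.
have -> : i = ord_max by apply: val_inj; apply/eqP; rewrite eqn_leq hi -ltnS ltn_ord.
by rewrite ffunE /s tpermL c0 mulr0.
Qed.
Lemma hasB m (w : word m.+1) : w 0 ord0 = 1 -> has_type (Kset w) m 0.
Proof.
move=> w0.
pose u : {ffun 'I_m -> word m.+1} :=
  [ffun i => ev (lift ord0 i) - w 0 (lift ord0 i) *: ev ord0].
pose v : {ffun 'I_0 -> word m.+1} := [ffun=> 0].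
have tmE : forall ab k, type_map u v ab 0 k =
    \sum_i ab.1 i * ((k == lift ord0 i)%:R - w 0 (lift ord0 i) * (k == ord0)%:R).
  move=> ab k; rewrite /type_map big_ord0 addr0 summxE; apply: eq_bigr => i _.
  by rewrite !mxE ffunE !mxE.
have tmL : forall ab i, type_map u v ab 0 (lift ord0 i) = ab.1 i.
  move=> ab i; rewrite tmE (bigD1 i) //= eqxx.
  rewrite mulr0 subr0 mulr1 big1 ?addr0 // => k ki.
  by rewrite (inj_eq (@lift_inj _ ord0)) eq_sym (negbTE ki) mulr0 subr0 mulr0.
have tm0 : forall ab, type_map u v ab 0 ord0 = - \sum_i ab.1 i * w 0 (lift ord0 i).
  move=> ab; rewrite tmE -sumrN; apply: eq_bigr => i _.
  by rewrite eqxx /= mulr1 sub0r mulrN.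
apply/existsP; exists u; apply/existsP; exists v; apply/and3P; split.
- by apply/forallP => -[].
- apply/injectiveP => -[a b] [a' b'] h; congr (_, _).
    by apply/ffunP => i; have := tmL (a, b) i; rewrite h tmL.
  by apply/ffunP => -[].
apply/eqP/setP => c; rewrite in_Kset; apply/imsetP/idP.
  case=> ab _ ->; rewrite /dotw big_ord_recl tm0 w0 mulr1.
  by rewrite addrC subr_eq0; apply/eqP; apply: eq_bigr => i _; rewrite tmL.
move=> /eqP hc; exists ([ffun i => c 0 (lift ord0 i)], [ffun=> false]) => //.
apply/rowP => k; case: (unliftP ord0 k) => [i ->|->].
  by rewrite tmL ffunE.
rewrite tm0; move: hc; rewrite /dotw big_ord_recl w0 mulr1 => /eqP.
rewrite addrC addr_eq0 => /eqP E; rewrite -[in LHS](opprK (c 0 ord0)) -E.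
by congr (- _); apply: eq_bigr => i _; rewrite /= ffunE.
Qed.

Definition wt m (u t : nat) : word m.+1 :=
  \row_k (if (k < u)%N then 1 else if (k < u + t)%N then 2 else 0).

Lemma card_lt n k : (k <= n)%N -> #|[set i : 'I_n | (i < k)%N]| = k.
Proof.
move=> kn; rewrite -[RHS](card_ord k) -(@card_imset _ _ (widen_ord kn)); last first.
  by move=> x y /(congr1 val) /= /val_inj.
apply: eq_card => i; rewrite inE; apply/idP/imsetP => [ik|[j _ ->]].
  by exists (Ordinal ik) => //; apply: val_inj.
exact: (ltn_ord j).
Qed.

Lemma card_btw n a b : (a <= b <= n)%N -> #|[set i : 'I_n | (a <= i < b)%N]| = (b - a)%N.
Proof.
case/andP => ab bn.
have -> : [set i : 'I_n | (a <= i < b)%N] = [set i : 'I_n | (i < b)%N] :\: [set i : 'I_n | (i < a)%N].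
  by apply/setP => i; rewrite !inE -leqNgt andbC.
rewrite cardsD card_lt //.
have -> : [set i : 'I_n | (i < b)%N] :&: [set i : 'I_n | (i < a)%N] = [set i : 'I_n | (i < a)%N].
  apply/setP => i; rewrite !inE; apply/andb_idl => ia; exact: leq_trans ia ab.
by rewrite card_lt // (leq_trans ab bn).
Qed.

Lemma phi_wt m u t : (u + t <= m.+1)%N -> phi (Kset (wt m u t)) = (u, t).
Proof.
move=> h; rewrite phi_Kset; congr (_, _).
  rewrite -[RHS](@card_lt m.+1 u); last by lia.
  by apply: eq_card => i; rewrite !inE !mxE; case: ifP => // _; case: ifP.
rewrite -[RHS](addKn u) -(@card_btw m.+1); last by apply/andP; split; lia.
apply: eq_card => i; rewrite !inE !mxE; case: ifP => [iu|iu] /=.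
  by rewrite (leqNgt u i) iu.
by rewrite (leqNgt u i) iu /=; case: ifP.
Qed.

Lemma good_wt m u t : (0 < u)%N -> (2 <= u + t <= m.+1)%N ->
  Kset (wt m u t) \in good_codes m.+1 m 0.
Proof.
move=> u0 /andP [h2 hn]; set w := wt m u t.
have w0 : w 0 ord0 = 1 by rewrite mxE u0.
have m1 : (1 < m.+1)%N by lia.
pose k1 : 'I_m.+1 := Ordinal m1.
have wk1 : w 0 k1 != 0.
  rewrite mxE /=; case: ifP => // _; have -> : (1 < u + t)%N by lia. by [].
rewrite inE Kset_code hasB //=; apply/negP => /existsP [D /andP [_ /triv_zero [i hi]]].
have [i0|i0] := eqVneq i ord0.
  pose c := w 0 k1 *: ev ord0 + (-1) *: ev k1.
  have : c \in Kset w.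
    by rewrite in_Kset dotwD !dotw_ev w0 mulr1 mulN1r subrr.
  move/hi; rewrite i0 !mxE eqxx mulr1 /= mulr0 addr0 => E.
  by move: wk1; rewrite mxE /= E.
pose c2 := ev i + (- w 0 i) *: ev ord0.
have : c2 \in Kset w.
  by rewrite in_Kset dotwD -{1}(scale1r (ev i)) !dotw_ev w0 mul1r mulr1 subrr.
by move/hi/eqP; rewrite !mxE eqxx (negbTE i0) mulr0 addr0.
Qed.
Lemma card_imset_eqrel (T U V : finType) (A : {set T}) (f : T -> U) (g : T -> V) :
  {in A &, forall x y, (f x == f y) = (g x == g y)} -> #|f @: A| = #|g @: A|.
Proof.
move=> H.
pose k (y : U) : option V := omap g [pick x in A | f x == y].
have kf : {in A, forall x, k (f x) = Some (g x)}.
  move=> x xA; rewrite /k; case: pickP => [x' /andP [x'A /eqP e]|/(_ x)]; last first.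
    by rewrite xA eqxx.
  by congr Some; apply/eqP; rewrite -H // e.
rewrite -[RHS](card_imset _ (@Some_inj _)) -imset_comp.
have -> : [set (Some \o g) x | x in A] = k @: (f @: A).
  by rewrite -imset_comp; apply: eq_in_imset => x xA /=; rewrite kf.
rewrite [RHS]card_in_imset //.
move=> _ _ /imsetP [x xA ->] /imsetP [y yA ->]; rewrite !kf // => -[e].
by apply/eqP; rewrite H // e.
Qed.

Lemma good_phi m (C : {set word m.+1}) : C \in good_codes m.+1 m 0 ->
  [&& 0 < (phi C).1, (phi C).1 + (phi C).2 <= m.+1 & ~~ (((phi C).1 == 1) && ((phi C).2 == 0))]%N.
Proof.
move=> gC; have := gC; rewrite inE => /and3P [cC tC ngC].
case: (hasK tC) => w [[j wj] eC].
rewrite eC in ngC *; rewrite phi_Kset /=.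
set X := [set i | 2 * w 0 i != 0]; set Y := [set i | (2 * w 0 i == 0) && (w 0 i != 0)].
have jX : j \in X by rewrite inE wj.
apply/and3P; split.
- by apply/card_gt0P; exists j.
- rewrite -cardsUI; have -> : X :&: Y = set0.
    by apply/setP => i; rewrite !inE; case: eqP.
  by rewrite cards0 addn0; apply: leq_trans (max_card _) _; rewrite card_ord.
apply/negP => /andP [/eqP X1 /eqP Y0].
have wk : forall k, k != j -> w 0 k = 0.
  move=> k kj.
  have kX : k \notin X.
    apply/negP => kX.
    have : (#|[set j; k]| <= #|X|)%N.
      apply: subset_leq_card; apply/subsetP => x; rewrite !inE => /orP [/eqP ->|/eqP ->]; [move: jX | move: kX]; rewrite inE => //.
    by rewrite cards2 eq_sym kj X1.
  have kY : k \notin Y.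
    by move: Y0 => /eqP; rewrite cards_eq0 => /eqP ->; rewrite inE.
  move: kX kY; rewrite !inE => kX kY; apply/eqP; move: kX kY; z4c (w 0 k).
move/negP: ngC; apply; apply/existsP; exists [set: word m]; rewrite setT_code /=.
exact: (Kset_triv wj wk).
Qed.

Lemma card_T2 k : #|[set p : 'I_k * 'I_k | (p.1 < p.2)%N]| = 'C(k, 2).
Proof.
rewrite -sum1dep_card big_mkcond /=.
rewrite -(pair_bigA _ (fun i j : 'I_k => if (i < j)%N then 1%N else 0%N)) /= exchange_big /=.
rewrite -bin2_sum big_mkord; apply: eq_bigr => j _.
rewrite -big_mkcond /= sum1dep_card card_lt //; exact: ltnW.
Qed.
Local Close Scope ring_scope.

Theorem mainTheorem8 (n : nat) : (0 < n)%N ->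
  Nprime n n.-1 0 = (n * (n + 1) %/ 2 - 1)%N.
Proof.
case: n => [//|m] _ /=.
rewrite /Nprime.
set G := good_codes m.+1 m 0.
pose phi' (C : {set word m.+1}) : 'I_m.+2 * 'I_m.+2 :=
  (inord (phi C).2, inord ((phi C).1 + (phi C).2)).
have P' : forall C D, C \in G -> D \in G -> (phi' C == phi' D) = (phi C == phi D).
  move=> C D gC gD; move: (good_phi gC) (good_phi gD); rewrite /phi'.
  case: (phi C) => a b; case: (phi D) => a' b' /= /and3P [_ h1 _] /and3P [_ h2 _].
  apply/eqP/eqP => [[e1 e2]|[-> ->]] //.
  have := congr1 (@nat_of_ord _) e1; have := congr1 (@nat_of_ord _) e2; rewrite !inordK; try lia.
  by move=> E1 E2; congr (_, _); lia.
have E : forall C, C \in G -> [set D0 in G | equiv_codes C D0] = [set D0 in G | phi C == phi D0].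
  move=> C gC; apply/setP => D0; rewrite [in LHS]in_set [in RHS]in_set.
  by apply: andb_id2l => g0; exact: key gC g0.
rewrite -(@card_imset_eqrel _ _ _ G phi'); last first.
  move=> C D gC gD; rewrite P' // !E //; apply/eqP/eqP => [->//|h].
  have : D \in [set D0 in G | phi D == phi D0] by rewrite inE gD eqxx.
  by rewrite -h inE => /andP [_ /eqP].
pose S := [set p : 'I_m.+2 * 'I_m.+2 | (p.1 < p.2)%N && ~~ ((p.1 == 0 :> nat) && (p.2 == 1 :> nat))].
have -> : phi' @: G = S.
  apply/setP => p; apply/imsetP/idP => [[C gC ->]|].
    move: (good_phi gC); rewrite /phi' inE /=.
    case: (phi C) => a b /= /and3P [h0 h1 h2]; rewrite !inordK; try lia.
  rewrite inE; case: p => t y /= /andP [ty nty].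
  have hy : (y <= m.+1)%N by rewrite -ltnS.
  exists (Kset (wt m (y - t) t)).
    apply: good_wt; first lia.
    apply/andP; split; last lia.
    move: nty; case: (nat_of_ord t) ty => [|t'] /=; last lia.
    by case: (nat_of_ord y) => [|[|y']].
  rewrite /phi' phi_wt /=; last lia.
  by rewrite subnK ?(ltnW ty) // !inord_val.
have x0S : (inord 0, inord 1) \in [set p : 'I_m.+2 * 'I_m.+2 | (p.1 < p.2)%N].
  by rewrite inE /= !inordK.
have -> : S = [set p : 'I_m.+2 * 'I_m.+2 | (p.1 < p.2)%N] :\ (inord 0, inord 1).
  have i0 : forall z : 'I_m.+2, (z == inord 0) = (z == 0 :> nat).
    by move=> z; rewrite -(inj_eq val_inj) /= inordK.
  have i1 : forall z : 'I_m.+2, (z == inord 1) = (z == 1 :> nat).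
    by move=> z; rewrite -(inj_eq val_inj) /= inordK.
  by apply/setP => -[t y]; rewrite !inE /= xpair_eqE i0 i1 andbC.
have := cardsD1 (inord 0, inord 1) [set p : 'I_m.+2 * 'I_m.+2 | (p.1 < p.2)%N].
rewrite x0S card_T2 bin2 -divn2 addn1 mulnC /= => ->.
by rewrite add1n subn1.
Qed.
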